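(* Let $\mathbb K$ be a field and $\alpha,\beta\in\mathbb K^\times$. Let $A=A_{\alpha,\beta}$ be the graded $\mathbb K$-algebra generated by the six degree-one elements $Y=\{a,b,c,x,y,z\}$ subject to the $26$ relations $$bY\cup Ya\cup\{x,y,z\}^2\cup\{a(x+y-z),\ (x-y)b,\ (x-z)b,\ xc-\alpha cx,\ yc-\beta cy,\ zc-cz\}$$ (here $bY=\{bu\mid u\in Y\}$, $Ya=\{ua\mid u\in Y\}$, $\{x,y,z\}^2$ is the set of the nine products of two of $x,y,z$). Then for every $n\ge0$ $$h_A(n+3)=\begin{cases}11,&\alpha^n+\beta^n=1,\\10,&\alpha^n+\beta^n\ne1.\end{cases}$$ In particular, the equation $\alpha^n+\beta^n=1$ has no solution with $\alpha,\beta\in\mathbb K^\times$ for any $n\ge3$ if and only if $h_{A_{\alpha,\beta}}(i)=10$ for all $i\ge6$ and all $\alpha,\beta\in\mathbb K^\times$.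
   Context: $h_A(n)=\dim A_n$. *)

(* Defs.v *)
From HB Require Import structures.
From mathcomp Require Import all_boot all_order all_algebra.
Set Implicit Arguments. Unset Strict Implicit. Unset Printing Implicit Defensive.
Import Order.TTheory GRing.Theory Num.Theory.
Local Open Scope ring_scope.

Definition ga : 'I_6 := inord 0.
Definition gb : 'I_6 := inord 1.
Definition gc : 'I_6 := inord 2.
Definition gx : 'I_6 := inord 3.
Definition gy : 'I_6 := inord 4.
Definition gz : 'I_6 := inord 5.

(* A homogeneous degree-2 element of the free algebra K<Y>:
   r s t = coefficient of the word  s t. *)
Definition quad (K : fieldType) := 'I_6 -> 'I_6 -> K.

Definition mono (K : fieldType) (p q : 'I_6) : quad K :=
  fun s t => ((s == p) && (t == q))%:R.

Definition qadd (K : fieldType) (r1 r2 : quad K) : quad K := fun s t => r1 s t + r2 s t.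
Definition qscale (K : fieldType) (k : K) (r : quad K) : quad K := fun s t => k * r s t.

Definition rels (K : fieldType) (al be : K) : seq (quad K) :=
  [seq mono K gb u | u <- enum 'I_6] ++
  [seq mono K u ga | u <- enum 'I_6] ++
  [seq mono K u v | u <- [:: gx; gy; gz], v <- [:: gx; gy; gz]] ++
  [:: qadd (qadd (mono K ga gx) (mono K ga gy)) (qscale (-1) (mono K ga gz));
      qadd (mono K gx gb) (qscale (-1) (mono K gy gb));
      qadd (mono K gx gb) (qscale (-1) (mono K gz gb));
      qadd (mono K gx gc) (qscale (- al) (mono K gc gx));
      qadd (mono K gy gc) (qscale (- be) (mono K gc gy));
      qadd (mono K gz gc) (qscale (-1) (mono K gc gz))].

(* Degree-n component of the free algebra K<Y>: functions on words of length n
   (coordinates in the basis of words). *)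
Definition freeDeg (K : fieldType) (n : nat) := {ffun n.-tuple 'I_6 -> K^o}.

(* The element  u r v  of degree n, for words u, v and a quadratic r
   (nonzero only on words of the form u s t v). *)
Definition relgen (K : fieldType) (n : nat) (r : quad K) (u v : seq 'I_6) :
  freeDeg K n :=
  [ffun w : n.-tuple 'I_6 =>
     if (take (size u) w == u) && (drop (size u + 2) w == v)
     then r (nth ord0 w (size u)) (nth ord0 w (size u).+1) else 0].

(* Degree-n component of the two-sided ideal generated by the relations:
   spanned by u r v with |u| + |v| + 2 = n. *)
Definition idealDeg (K : fieldType) (al be : K) (n : nat) : {vspace freeDeg K n} :=
  (\sum_(i < n.-1) \sum_(u : i.-tuple 'I_6) \sum_(v : (n - 2 - i).-tuple 'I_6)
     \sum_(r <- rels al be) <[relgen n r u v]>)%VS.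

Definition hA (K : fieldType) (al be : K) (n : nat) : nat :=
  (\dim (fullv : {vspace freeDeg K n}) - \dim (idealDeg al be n))%N.

(* Main.v *)
Require Import Defs.
From HB Require Import structures.
From mathcomp Require Import all_boot all_order all_algebra.
From mathcomp Require Import ring zify.
Import Order.TTheory GRing.Theory Num.Theory.
Local Open Scope ring_scope.

Lemma vga : val ga = 0%N. Proof. exact: inordK. Qed.
Lemma vgb : val gb = 1%N. Proof. exact: inordK. Qed.
Lemma vgc : val gc = 2%N. Proof. exact: inordK. Qed.
Lemma vgx : val gx = 3%N. Proof. exact: inordK. Qed.
Lemma vgy : val gy = 4%N. Proof. exact: inordK. Qed.
Lemma vgz : val gz = 5%N. Proof. exact: inordK. Qed.

Section Gen.
Variable K : fieldType.

Definition qsum (V : lmodType K) (r : quad K) (h : 'I_6 -> 'I_6 -> V) : V :=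
  \sum_(s : 'I_6) \sum_(t : 'I_6) r s t *: h s t.
Arguments qsum {V}.

Lemma qsum_mono (V : lmodType K) p q (h : 'I_6 -> 'I_6 -> V) :
  qsum (mono K p q) h = h p q.
Proof.
rewrite /qsum (bigD1 p) //= [X in _ + X]big1; last first.
  move=> s ne; apply: big1 => t _; rewrite /mono.
  by move: ne => /negbTE ->; rewrite /= scale0r.
rewrite addr0 (bigD1 q) //= [X in _ + X]big1; last first.
  by move=> t; rewrite /mono => /negbTE ->; rewrite andbF scale0r.
by rewrite addr0 /mono !eqxx scale1r.
Qed.

Lemma qsum_add (V : lmodType K) r1 r2 (h : 'I_6 -> 'I_6 -> V) :
  qsum (qadd r1 r2) h = qsum r1 h + qsum r2 h.
Proof.
rewrite /qsum -big_split; apply: eq_bigr => s _.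
rewrite -big_split; apply: eq_bigr => t _; by rewrite /qadd scalerDl.
Qed.

Lemma qsum_scale (V : lmodType K) k r (h : 'I_6 -> 'I_6 -> V) :
  qsum (qscale k r) h = k *: qsum r h.
Proof.
rewrite /qsum scaler_sumr; apply: eq_bigr => s _.
rewrite scaler_sumr; apply: eq_bigr => t _; by rewrite /qscale scalerA.
Qed.

Definition ew (N : nat) (w : seq 'I_6) : freeDeg K N :=
  [ffun t : N.-tuple 'I_6 => ((tval t == w)%:R : K^o)].

Lemma split3 (T : Type) (x0 : T) (w : seq T) i : (i.+2 <= size w)%N ->
  w = take i w ++ nth x0 w i :: nth x0 w i.+1 :: drop i.+2 w.
Proof.
move=> H; rewrite -{1}(cat_take_drop i w); congr (_ ++ _).
rewrite (drop_nth x0); last by lia.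
by rewrite (drop_nth x0); last by lia.
Qed.

Arguments split3 {T}.

Lemma relgenE N r (u v : seq 'I_6) : (size u + size v + 2 = N)%N ->
  relgen N r u v = qsum r (fun s t => ew N (u ++ s :: t :: v)).
Proof.
move=> HN; apply/ffunP => w; rewrite ffunE /qsum sum_ffunE.
under eq_bigr => s _ do rewrite sum_ffunE.
have Hw : size w = N by rewrite size_tuple.
have Hs : ((size u).+2 <= size w)%N by lia.
have E : forall s t, (tval w == u ++ s :: t :: v) =
   [&& take (size u) w == u, nth ord0 w (size u) == s,
       nth ord0 w (size u).+1 == t & drop (size u).+2 w == v].
  move=> s t; rewrite {1}(split3 ord0 _ _ Hs) eqseq_cat; last first.
    rewrite size_take; case: ltnP => // H1; move: Hs H1.
    move=> H2 H3; have := leq_trans H2 H3; by rewrite ltnNge ltnW.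
  by rewrite !eqseq_cons.
rewrite addn2.
case Ht: (take (size u) w == u) => /=; last first.
  by rewrite big1 // => s _; rewrite big1 // => t _; rewrite !ffunE E Ht /= mulr0n scaler0.
case Hd: (drop (size u).+2 w == v) => /=; last first.
  by rewrite big1 // => s _; rewrite big1 // => t _; rewrite !ffunE E Ht Hd /= !andbF mulr0n scaler0.
set p := nth ord0 w (size u); set q := nth ord0 w (size u).+1.
rewrite (bigD1 p) //= [X in _ + X]big1; last first.
  move=> s ne; apply: big1 => t _; rewrite !ffunE E Ht Hd /= eq_sym.
  by move: ne => /negbTE ->; rewrite mulr0n scaler0.
rewrite addr0 (bigD1 q) //= [X in _ + X]big1; last first.
  move=> t ne; rewrite !ffunE E Ht Hd /= eqxx [q == t]eq_sym.
  by move: ne => /negbTE ->; rewrite mulr0n scaler0.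
rewrite addr0 !ffunE E Ht Hd /= !eqxx /= mulr1n; exact: (esym (mulr1 _)).
Qed.

End Gen.

Section Ideal.
Variables (K : fieldType) (al be : K).

Lemma In_cat (T : Type) (x : T) s1 s2 :
  List.In x (s1 ++ s2) <-> List.In x s1 \/ List.In x s2.
Proof.
elim: s1 => [|y s1 IH] /=; first by split; [right|case].
split.
  by case=> [->|/IH [H|H]]; [left; left|left; right|right].
by case=> [[->|H]|H]; [left|right; apply/IH; left|right; apply/IH; right].
Qed.

Lemma In_map (T U : Type) (f : T -> U) x s : List.In x s -> List.In (f x) (map f s).
Proof. elim: s => [|y s IH] //= [->|H]; [left|right; apply: IH] => //. Qed.

Lemma In_mem (T : eqType) (x : T) s : x \in s -> List.In x s.
Proof.
elim: s => [|y s IH] //; rewrite inE => /orP [/eqP ->|H]; [left|right; apply: IH] => //.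
Qed.

Lemma sub_big_seq (vT : vectType K) (T : Type) (s : seq T) (F : T -> {vspace vT}) x :
  List.In x s -> (F x <= \sum_(y <- s) F y)%VS.
Proof.
elim: s => [|y s IH] //= [->|H]; rewrite big_cons; first exact: addvSl.
exact: subv_trans (IH H) (addvSr _ _).
Qed.

Lemma big_seq_subv (vT : vectType K) (T : Type) (s : seq T) (F : T -> {vspace vT}) W :
  (forall x, List.In x s -> (F x <= W)%VS) -> (\sum_(x <- s) F x <= W)%VS.
Proof.
elim: s => [|y s IH] H; first by rewrite big_nil sub0v.
rewrite big_cons subv_add H /=; last by left.
by apply: IH => x Hx; apply: H; right.
Qed.

Lemma memI N r (u v : seq 'I_6) : List.In r (rels al be) ->
  (size u + size v + 2 = N)%N -> relgen N r u v \in idealDeg al be N.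
Proof.
move=> Hr HN.
have Hi : (size u < N.-1)%N by rewrite -HN addn2 /=; apply: leq_addr.
pose i : 'I_N.-1 := Ordinal Hi.
have Hv : size v == (N - 2 - i)%N by apply/eqP; rewrite /= -HN; lia.
pose U : i.-tuple 'I_6 := in_tuple u.
pose V : (N - 2 - i).-tuple 'I_6 := Tuple Hv.
have -> : relgen N r u v = relgen N r U V by [].
rewrite /idealDeg memvE.
apply: (sumv_sup i) => //; apply: (sumv_sup U) => //; apply: (sumv_sup V) => //.
exact: (@sub_big_seq _ _ _ (fun r0 => <[relgen N r0 U V]>%VS) r Hr).
Qed.

Definition isxyz (t : 'I_6) := t = gx \/ t = gy \/ t = gz.
Definition lam (t : 'I_6) : K := if t == gx then al else if t == gy then be else 1.

Lemma In_rels_b u : List.In (mono K gb u) (rels al be).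
Proof. apply/In_cat; left; apply: In_map; apply: In_mem; exact: mem_enum. Qed.

Lemma In_rels_a u : List.In (mono K u ga) (rels al be).
Proof. apply/In_cat; right; apply/In_cat; left; apply: In_map; apply: In_mem; exact: mem_enum. Qed.

Lemma In_rels_xyz s t : isxyz s -> isxyz t -> List.In (mono K s t) (rels al be).
Proof.
move=> Hs Ht; apply/In_cat; right; apply/In_cat; right; apply/In_cat; left.
by case: Hs => [->|[->|->]]; case: Ht => [->|[->|->]]; simpl; tauto.
Qed.

Definition r_az := qadd (qadd (mono K ga gx) (mono K ga gy)) (qscale (-1) (mono K ga gz)).
Definition r_xb t := qadd (mono K gx gb) (qscale (-1) (mono K t gb)).
Definition r_c t := qadd (mono K t gc) (qscale (- lam t) (mono K gc t)).

Lemma gxy : (gx == gy) = false. Proof. by rewrite -val_eqE vgx vgy. Qed.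
Lemma gxz : (gx == gz) = false. Proof. by rewrite -val_eqE vgx vgz. Qed.
Lemma gyz : (gy == gz) = false. Proof. by rewrite -val_eqE vgy vgz. Qed.
Lemma gyx : (gy == gx) = false. Proof. by rewrite -val_eqE vgx vgy. Qed.
Lemma gzx : (gz == gx) = false. Proof. by rewrite -val_eqE vgx vgz. Qed.
Lemma gzy : (gz == gy) = false. Proof. by rewrite -val_eqE vgy vgz. Qed.

Lemma lamx : lam gx = al. Proof. by rewrite /lam eqxx. Qed.
Lemma lamy : lam gy = be. Proof. by rewrite /lam gyx eqxx. Qed.
Lemma lamz : lam gz = 1. Proof. by rewrite /lam gzx gzy. Qed.

Lemma In_rels_rest : List.In r_az (rels al be) /\ List.In (r_xb gy) (rels al be) /\
  List.In (r_xb gz) (rels al be) /\ (forall t, isxyz t -> List.In (r_c t) (rels al be)).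
Proof.
have H : forall r, List.In r [:: r_az; r_xb gy; r_xb gz; r_c gx; r_c gy; r_c gz] ->
   List.In r (rels al be).
  move=> r Hr; do 3 (apply/In_cat; right).
  by rewrite /r_c lamx lamy lamz in Hr.
split; first by apply: H; simpl; tauto.
split; first by apply: H; simpl; tauto.
split; first by apply: H; simpl; tauto.
by move=> t [->|[->|->]]; apply: H; simpl; tauto.
Qed.

Definition cong N (X Y : freeDeg K N) := X - Y \in idealDeg al be N.
Arguments cong {N}.

Lemma cong_refl N X : @cong N X X.
Proof. by rewrite /cong subrr mem0v. Qed.
Lemma cong_sym N X Y : @cong N X Y -> cong Y X.
Proof. by rewrite /cong -memvN opprB. Qed.
Lemma cong_trans N X Y Z : @cong N X Y -> cong Y Z -> cong X Z.
Proof. by rewrite /cong => H1 H2; have := memvD H1 H2; rewrite addrA subrK. Qed.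
Lemma cong_add N X1 X2 Y1 Y2 : @cong N X1 Y1 -> cong X2 Y2 -> cong (X1 + X2) (Y1 + Y2).
Proof. by rewrite /cong => H1 H2; have := memvD H1 H2; rewrite opprD addrACA. Qed.
Lemma cong_scale N k X Y : @cong N X Y -> cong (k *: X) (k *: Y).
Proof. by rewrite /cong => H; have := memvZ k H; rewrite scalerBr. Qed.
Lemma cong0 N X : (X \in idealDeg al be N) -> @cong N X 0.
Proof. by rewrite /cong subr0. Qed.

Arguments cong_sym {N X Y}.
Arguments cong_trans {N X Y Z}.
Arguments cong_add {N X1 X2 Y1 Y2}.
Arguments cong_scale {N} k {X Y}.

Section Pos.
Variables (N : nat) (p q : seq 'I_6).
Hypothesis HN : (size p + size q + 2 = N)%N.
Local Notation E s t := (ew K N (p ++ s :: t :: q)).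

Lemma I_b t : E gb t \in idealDeg al be N.
Proof. by have := @memI N _ p q (In_rels_b t) HN; rewrite relgenE // qsum_mono. Qed.

Lemma I_a t : E t ga \in idealDeg al be N.
Proof. by have := @memI N _ p q (In_rels_a t) HN; rewrite relgenE // qsum_mono. Qed.

Lemma I_xyz s t : isxyz s -> isxyz t -> E s t \in idealDeg al be N.
Proof. by move=> Hs Ht; have := @memI N _ p q (@In_rels_xyz s t Hs Ht) HN; rewrite relgenE // qsum_mono. Qed.

Lemma I_az : cong (E ga gz) (E ga gx + E ga gy).
Proof.
have := @memI N _ p q (proj1 In_rels_rest) HN; rewrite relgenE // /r_az.
by rewrite !qsum_add qsum_scale !qsum_mono scaleN1r => H; apply: cong_sym.
Qed.

Lemma I_xb t : isxyz t -> cong (E t gb) (E gx gb).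
Proof.
move=> [->|[->|->]]; first exact: cong_refl.
  have := @memI N _ p q (proj1 (proj2 In_rels_rest)) HN; rewrite relgenE // /r_xb.
  by rewrite !qsum_add qsum_scale !qsum_mono scaleN1r => H; apply: cong_sym.
have := @memI N _ p q (proj1 (proj2 (proj2 In_rels_rest))) HN; rewrite relgenE // /r_xb.
by rewrite !qsum_add qsum_scale !qsum_mono scaleN1r => H; apply: cong_sym.
Qed.

Lemma I_c t : isxyz t -> cong (E t gc) (lam t *: E gc t).
Proof.
move=> Ht; have := @memI N _ p q (proj2 (proj2 (proj2 In_rels_rest)) t Ht) HN.
by rewrite relgenE // /r_c !qsum_add qsum_scale !qsum_mono scaleNr.
Qed.
End Pos.

Lemma I_shift t k p q N : isxyz t -> (size p + k + size q + 1 = N)%N ->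
  cong (ew K N (p ++ t :: nseq k gc ++ q)) (lam t ^+ k *: ew K N (p ++ nseq k gc ++ t :: q)).
Proof.
move=> Ht; elim: k p => [|k IH] p HN.
  by rewrite expr0 scale1r; exact: cong_refl.
have HN' : (size p + size (nseq k gc ++ q) + 2 = N)%N by rewrite size_cat size_nseq -HN; lia.
change (nseq k.+1 gc) with (gc :: nseq k gc).
apply: (cong_trans (@I_c N p (nseq k gc ++ q) HN' t Ht)).
have := IH (rcons p gc); rewrite !cat_rcons size_rcons => H.
rewrite exprS -scalerA; apply: cong_scale; apply: H; rewrite -HN; lia.
Qed.

Lemma I_top n : al ^+ n + be ^+ n != 1 ->
  ew K n.+3 (ga :: nseq n gc ++ [:: gx; gb]) \in idealDeg al be n.+3.
Proof.
move=> Hn.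
set T := ew K n.+3 (ga :: nseq n gc ++ [:: gx; gb]).
have isx : isxyz gx by left.
have isy : isxyz gy by right; left.
have isz : isxyz gz by right; right.
have Hs : forall t, isxyz t -> cong (ew K n.+3 (ga :: t :: nseq n gc ++ [:: gb]))
       (lam t ^+ n *: ew K n.+3 (ga :: nseq n gc ++ [:: t; gb])).
  by move=> t Ht; apply: (@I_shift t n [:: ga] [:: gb] n.+3 Ht) => /=; lia.
have Hb : forall t, isxyz t -> cong (ew K n.+3 (ga :: nseq n gc ++ [:: t; gb])) T.
  move=> t Ht.
  have HN : (size (ga :: nseq n gc) + size (@nil 'I_6) + 2 = n.+3)%N by rewrite /= size_nseq; lia.
  exact: (@I_xb n.+3 _ _ HN t Ht).
have C1 : cong T (ew K n.+3 (ga :: gz :: nseq n gc ++ [:: gb])).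
  apply: cong_sym; apply: cong_trans (Hs _ isz) _.
  by rewrite lamz expr1n scale1r; apply: Hb.
have C2 := @I_az n.+3 [::] (nseq n gc ++ [:: gb]).
have C3 : cong (ew K n.+3 (ga :: gx :: nseq n gc ++ [:: gb]) +
                ew K n.+3 (ga :: gy :: nseq n gc ++ [:: gb])) (al ^+ n *: T + be ^+ n *: T).
  apply: cong_add.
    by apply: cong_trans (Hs _ isx) _; rewrite lamx; apply: cong_scale; apply: Hb.
  by apply: cong_trans (Hs _ isy) _; rewrite lamy; apply: cong_scale; apply: Hb.
have C4 : cong T (al ^+ n *: T + be ^+ n *: T).
  apply: cong_trans C1 _; apply: cong_trans C3.
  by apply: C2; rewrite /= size_cat size_nseq /=; lia.
have : (1 - (al ^+ n + be ^+ n)) *: T \in idealDeg al be n.+3.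
  by move: C4; rewrite /cong -scalerDl scalerBl scale1r.
move=> H; have := memvZ (1 - (al ^+ n + be ^+ n))^-1 H.
rewrite scalerA mulVf ?scale1r //.
by rewrite subr_eq0 eq_sym.
Qed.

End Ideal.

Definition Pg (K : fieldType) (g : 'I_6) (N : nat) (F : freeDeg K N) : freeDeg K N.+1 :=
  [ffun t : N.+1.-tuple 'I_6 => if thead t == g then F [tuple of behead t] else 0].

Arguments Pg {K} g {N}.

Fact Pg_lin K g N : linear (@Pg K g N).
Proof.
move=> k F G; apply/ffunP => t; rewrite !ffunE.
by case: ifP => _; rewrite ?scaler0 ?addr0.
Qed.

HB.instance Definition _ (K : fieldType) g N :=
  GRing.isLinear.Build K (freeDeg K N) (freeDeg K N.+1) *:%R (@Pg K g N) (@Pg_lin K g N).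

Section Span.
Variables (K : fieldType) (al be : K).
Local Notation I N := (idealDeg al be N).
Local Notation ew := (ew K).

Lemma Pg_ew g N w : Pg g (ew N w) = ew N.+1 (g :: w).
Proof.
apply/ffunP => t; rewrite !ffunE; case/tupleP: t => h t' /=.
rewrite theadE eqseq_cons; case: (h == g) => //=.
Qed.

Lemma Pg_rel g N (r : quad K) u v : Pg g (relgen N r u v) = relgen N.+1 r (g :: u) v.
Proof.
apply/ffunP => t; rewrite !ffunE; case/tupleP: t => h t' /=.
by rewrite theadE eqseq_cons; case: (h == g).
Qed.

Lemma Pg_I g N F : F \in I N -> Pg g F \in I N.+1.
Proof.
move=> HF.
have sub : (I N <= (linfun (@Pg K g N)) @^-1: I N.+1)%VS.
  apply/subv_sumP => i _; apply/subv_sumP => u _; apply/subv_sumP => v _.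
  apply: big_seq_subv => r Hr.
  rewrite -memvE -memv_preim lfunE /= Pg_rel; apply: memI => //.
  rewrite /= !size_tuple; apply: (_ : forall j, (j < N.-1)%N -> (j.+1 + (N - 2 - j) + 2 = N.+1)%N) (ltn_ord i).
  by case: (N) => //= M j Hj; lia.
by have := subvP sub F HF; rewrite -memv_preim lfunE.
Qed.

Definition base (m : nat) : seq (seq 'I_6) :=
  [:: nseq m.+1 gc; nseq m gc ++ [:: gx]; nseq m gc ++ [:: gy]; nseq m gc ++ [:: gz];
      nseq m gc ++ [:: gb]; ga :: nseq m gc].
Definition mid (m : nat) : seq (seq 'I_6) :=
  [:: ga :: nseq m gc ++ [:: gx]; ga :: nseq m gc ++ [:: gy]; ga :: nseq m gc ++ [:: gb];
      nseq m gc ++ [:: gx; gb]].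
Definition top (m : nat) : seq 'I_6 := ga :: nseq m gc ++ [:: gx; gb].

Definition normals (N : nat) : seq (seq 'I_6) :=
  match N with
  | 0 => [::]
  | m.+1 => base m ++ match m with
                      | 0 => [::]
                      | m'.+1 => mid m' ++ match m' with
                                           | 0 => [::]
                                           | m''.+1 => [:: top m'']
                                           end
                      end
  end.

Definition W N := (I N + <<map (ew N) (normals N)>>)%VS.

Lemma inW_I N F : F \in I N -> F \in W N.
Proof. by move=> H; apply: (subvP (addvSl _ _)). Qed.
Lemma inW_norm N w : w \in normals N -> ew N w \in W N.
Proof. by move=> H; apply: (subvP (addvSr _ _)); apply: memv_span; apply: map_f. Qed.
Lemma inW_cong N F G : @cong K al be N F G -> G \in W N -> F \in W N.
Proof.
move=> H1 H2; rewrite -(subrK G F); apply: memvD => //; exact: inW_I.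
Qed.
Lemma inW_add N F G : F \in W N -> G \in W N -> F + G \in W N.
Proof. exact: memvD. Qed.
Lemma inW_scale N k F : F \in W N -> k *: F \in W N.
Proof. exact: memvZ. Qed.

Lemma letter_cases (g : 'I_6) :
  g = ga \/ g = gb \/ g = gc \/ g = gx \/ g = gy \/ g = gz.
Proof.
case: g => [[|[|[|[|[|[|n]]]]]] Hg].
- by left; apply/val_inj; rewrite /= vga.
- by right; left; apply/val_inj; rewrite /= vgb.
- by right; right; left; apply/val_inj; rewrite /= vgc.
- by right; right; right; left; apply/val_inj; rewrite /= vgx.
- by right; right; right; right; left; apply/val_inj; rewrite /= vgy.
- by right; right; right; right; right; apply/val_inj; rewrite /= vgz.
- by [].
Qed.

End Span.

Arguments inW_I {K al be N F}.
Arguments inW_norm {K al be N w}.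
Arguments inW_cong {K al be N F G}.
Arguments inW_add {K al be N F G}.
Arguments inW_scale {K al be N} k {F}.
Arguments cong_sym {K al be N X Y}.
Arguments cong_trans {K al be N X Y Z}.
Arguments cong_add {K al be N X1 X2 Y1 Y2}.
Arguments cong_scale {K al be N} k {X Y}.

Section Span2.
Variables (K : fieldType) (al be : K).
Local Notation I N := (idealDeg al be N).
Local Notation ew := (ew K).
Local Notation W := (@W K al be).

Lemma Ibne M w' : w' != [::] -> (size w' + 1 = M)%N -> ew M (gb :: w') \in W M.
Proof.
case: w' => [|t w''] H0 H; first by rewrite eqxx in H0.
apply: inW_I.
have HN : (size (@nil 'I_6) + size w'' + 2 = M)%N by rewrite -H /=; lia.
exact: (@I_b K al be M [::] w'' HN t).
Qed.

Lemma step g m w : w \in normals m.+1 -> ew m.+2 (g :: w) \in W m.+2.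
Proof.
have nb : forall w', w' \in base m.+1 -> ew m.+2 w' \in W m.+2.
  by move=> w' H; apply: inW_norm; rewrite /normals mem_cat H.
have nm : forall w', w' \in mid m -> ew m.+2 w' \in W m.+2.
  by move=> w' H; apply: inW_norm; rewrite /normals mem_cat orbC mem_cat H.
have bxyz : forall k t, isxyz t -> nseq k gc ++ [:: t] \in base k.
  by move=> k t [->|[->|->]]; rewrite !inE eqxx ?orbT.
have Ia0 : forall w', (size w' + 2 = m.+2)%N -> ew m.+2 (g :: ga :: w') \in W m.+2.
  move=> w' H; apply: inW_I; exact: (@I_a K al be m.+2 [::] w' H g).
have cxyz : forall t, isxyz t -> ew m.+2 (g :: nseq m gc ++ [:: t]) \in W m.+2.
  move=> t Ht; case: (letter_cases g) => [->|[->|[->|Hg]]].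
  - case: Ht => [->|[->|->]]; first by apply: nm; rewrite !inE eqxx.
      by apply: nm; rewrite !inE eqxx ?orbT.
    have H1 := @I_shift K al be gz m [:: ga] [::] m.+2 (or_intror (or_intror erefl)).
    rewrite /= !cats0 lamz expr1n scale1r in H1.
    apply: (inW_cong (cong_sym (H1 _))); first by rewrite ?size_nseq /=; lia.
    apply: (inW_cong (@I_az K al be m.+2 [::] (nseq m gc) _)); first by rewrite ?size_nseq /=; lia.
    apply: inW_add.
      have H2 := @I_shift K al be gx m [:: ga] [::] m.+2 (or_introl erefl).
      rewrite /= !cats0 in H2; apply: (inW_cong (H2 _)); first by rewrite ?size_nseq /=; lia.
      by apply: inW_scale; apply: nm; rewrite !inE eqxx.
    have H2 := @I_shift K al be gy m [:: ga] [::] m.+2 (or_intror (or_introl erefl)).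
    rewrite /= !cats0 in H2; apply: (inW_cong (H2 _)); first by rewrite ?size_nseq /=; lia.
    by apply: inW_scale; apply: nm; rewrite !inE eqxx ?orbT.
  - by apply: Ibne; [case: (m)|rewrite size_cat size_nseq /=; lia].
  - exact: nb (bxyz m.+1 t Ht).
  - have H1 := @I_shift K al be g m [::] [:: t] m.+2 Hg.
    apply: (inW_cong (H1 _)); first by rewrite /= ?size_nseq; lia.
    apply: inW_scale; apply: inW_I.
    by apply: (@I_xyz K al be m.+2 (nseq m gc) [::] _ g t Hg Ht); rewrite size_nseq /=; lia.
rewrite /normals mem_cat => /orP [Hb|Hr].
  move: Hb => /In_mem /= [<-|[<-|[<-|[<-|[<-|[<-|[]]]]]]].
  - case: (letter_cases g) => [->|[->|[->|Hg]]].
    + by apply: nb; rewrite !inE eqxx ?orbT.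
    + by apply: Ibne => //; rewrite /= size_nseq; lia.
    + by apply: nb; rewrite !inE eqxx.
    + have H1 := @I_shift K al be g m.+1 [::] [::] m.+2 Hg.
      rewrite /= !cats0 in H1; apply: (inW_cong (H1 _)); first by rewrite ?size_nseq /=; lia.
      by apply: inW_scale; apply: nb; exact: (bxyz m.+1 g Hg).
  - by apply: cxyz; left.
  - by apply: cxyz; right; left.
  - by apply: cxyz; right; right.
  - case: (letter_cases g) => [->|[->|[->|Hg]]].
    + by apply: nm; rewrite !inE eqxx ?orbT.
    + by apply: Ibne; [case: (m)|rewrite size_cat size_nseq /=; lia].
    + by apply: nb; rewrite !inE eqxx ?orbT.
    + have H1 := @I_shift K al be g m [::] [:: gb] m.+2 Hg.
      apply: (inW_cong (H1 _)); first by rewrite /= ?size_nseq; lia.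
      apply: inW_scale.
      apply: (inW_cong (@I_xb K al be m.+2 (nseq m gc) [::] _ g Hg)).
        by rewrite size_nseq /=; lia.
      by apply: nm; rewrite !inE eqxx ?orbT.
  - by apply: Ia0; rewrite size_nseq; lia.
case Em : m Hr => [|m'] //; subst m.
rewrite mem_cat => /orP [Hm|Ht].
  move: Hm => /In_mem /= [<-|[<-|[<-|[<-|[]]]]].
  - by apply: Ia0; rewrite size_cat size_nseq /=; lia.
  - by apply: Ia0; rewrite size_cat size_nseq /=; lia.
  - by apply: Ia0; rewrite size_cat size_nseq /=; lia.
  case: (letter_cases g) => [->|[->|[->|Hg]]].
  + by apply: inW_norm; rewrite /normals /top !mem_cat mem_seq1 eqxx !orbT.
  + by apply: Ibne; [case: (m')|rewrite size_cat size_nseq /=; lia].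
  + by apply: nm; rewrite !inE eqxx ?orbT.
  + have H1 := @I_shift K al be g m' [::] [:: gx; gb] m'.+3 Hg.
    apply: (inW_cong (H1 _)); first by rewrite /= ?size_nseq; lia.
    apply: inW_scale; apply: inW_I.
    apply: (@I_xyz K al be m'.+3 (nseq m' gc) [:: gb] _ g gx Hg (or_introl erefl)).
    by rewrite size_nseq /=; lia.
case Em2 : m' Ht => [|m''] //; rewrite inE => /eqP ->; subst m'.
by apply: Ia0; rewrite size_cat size_nseq /=; lia.
Qed.

End Span2.

Section Upper.
Variables (K : fieldType) (al be : K).
Local Notation I N := (idealDeg al be N).
Local Notation ew := (ew K).
Local Notation W := (@W K al be).

Lemma span_all N w : size w = N.+1 -> ew N.+1 w \in W N.+1.
Proof.
elim: N w => [|N IH] [|g w] //= Hs.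
  case: w Hs => // _; apply: inW_norm.
  by case: (letter_cases g) => [->|[->|[->|[->|[->|->]]]]]; rewrite /normals /base !inE eqxx ?orbT.
rewrite -Pg_ew.
have sub : (W N.+1 <= (linfun (Pg g)) @^-1: W N.+2)%VS.
  rewrite subv_add; apply/andP; split.
    apply/subvP => F HF; rewrite -memv_preim lfunE /=; apply: inW_I; exact: Pg_I.
  apply/span_subvP => X /mapP [n Hn ->]; rewrite -memv_preim lfunE /= Pg_ew; exact: step.
have := subvP sub _ (IH w _); rewrite -memv_preim lfunE; apply; by case: Hs.
Qed.

Lemma ew_decomp N (F : freeDeg K N) : F = \sum_(t : N.-tuple 'I_6) F t *: ew N t.
Proof.
apply/ffunP => t0; rewrite sum_ffunE (bigD1 t0) //= big1 => [|t ne]; last first.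
  rewrite !ffunE; move: ne; rewrite -val_eqE eq_sym => /negbTE ->.
  by rewrite mulr0n scaler0.
by rewrite !ffunE eqxx mulr1n addr0; exact: (esym (mulr1 _)).
Qed.

Lemma full_W N : (fullv <= W N.+1)%VS.
Proof.
apply/subvP => F _; rewrite (@ew_decomp N.+1 F); apply: memv_suml => t _.
by apply: memvZ; apply: span_all; rewrite size_tuple.
Qed.

Lemma dim_upper_gen N (S : seq (seq 'I_6)) :
  (W N.+1 <= I N.+1 + <<map (ew N.+1) S>>)%VS ->
  (\dim (fullv : {vspace freeDeg K N.+1}) <= \dim (I N.+1) + size S)%N.
Proof.
move=> H; apply: leq_trans (dimvS (subv_trans (full_W N) H)) _.
apply: leq_trans (dimv_add_leqif _ _) _; rewrite leq_add2l.
by apply: leq_trans (dim_span _) _; rewrite size_map.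
Qed.

Lemma normals3 n : normals n.+3 = base n.+2 ++ mid n.+1 ++ [:: top n].
Proof. by []. Qed.

Lemma dim_upper11 n :
  (\dim (fullv : {vspace freeDeg K n.+3}) <= \dim (I n.+3) + 11)%N.
Proof. by have := @dim_upper_gen n.+2 (normals n.+3) (subvv _); rewrite normals3 !size_cat. Qed.

Lemma dim_upper10 n : al ^+ n + be ^+ n != 1 ->
  (\dim (fullv : {vspace freeDeg K n.+3}) <= \dim (I n.+3) + 10)%N.
Proof.
move=> Hn; apply: (@dim_upper_gen n.+2 (base n.+2 ++ mid n.+1)).
rewrite subv_add addvSl andTb; apply/span_subvP => X /mapP [w Hw ->].
move: Hw; rewrite normals3 catA mem_cat => /orP [H|].
  by apply: (subvP (addvSr _ _)); apply: memv_span; apply: map_f.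
rewrite inE => /eqP ->; apply: (subvP (addvSl _ _)); exact: I_top.
Qed.

End Upper.

Section Auto1.
Variables (K : fieldType) (al be : K).

Record St1 := mk1 { s0 : K; sC : K; sX : K; sY : K; sZ : K; sB : K; sXB : K;
                    sA : K; sAa : K; sAb : K; sAX : K; sAY : K; sAB : K }.

Definition zero1 := mk1 0 0 0 0 0 0 0 0 0 0 0 0 0.
Definition add1 (A B : St1) := mk1 (s0 A + s0 B) (sC A + sC B) (sX A + sX B) (sY A + sY B)
  (sZ A + sZ B) (sB A + sB B) (sXB A + sXB B) (sA A + sA B) (sAa A + sAa B) (sAb A + sAb B)
  (sAX A + sAX B) (sAY A + sAY B) (sAB A + sAB B).
Definition scale1 (k : K) (A : St1) := mk1 (k * s0 A) (k * sC A) (k * sX A) (k * sY A)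
  (k * sZ A) (k * sB A) (k * sXB A) (k * sA A) (k * sAa A) (k * sAb A)
  (k * sAX A) (k * sAY A) (k * sAB A).

Definition step1 (n : nat) (v : St1) : St1 :=
  match n with
  | 0 => mk1 0 0 0 0 0 0 0 (s0 v) (s0 v) (s0 v) 0 0 0
  | 1 => mk1 0 0 0 0 0 (s0 v + sC v) (sX v + sY v + sZ v) 0 0 0 0 0 (sA v)
  | 2 => mk1 0 (s0 v + sC v) (al * sX v) (be * sY v) (sZ v) 0 0 (sA v) (al * sAa v)
             (be * sAb v) (al * sAX v) (be * sAY v) 0
  | 3 => mk1 0 0 (s0 v + sC v) 0 0 0 0 0 0 0 (sA v) 0 0
  | 4 => mk1 0 0 0 (s0 v + sC v) 0 0 0 0 0 0 0 (sA v) 0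
  | 5 => mk1 0 0 0 0 (s0 v + sC v) 0 0 0 0 0 (sAa v) (sAb v) 0
  | _ => zero1
  end.

Definition fold1 (w : seq 'I_6) (v : St1) := foldl (fun v g => step1 (val g) v) v w.

Ltac receq := rewrite /zero1 /add1 /scale1 /=; congr mk1; ring.

Lemma step1_add n A B : step1 n (add1 A B) = add1 (step1 n A) (step1 n B).
Proof. by case: A; case: B => *; do 6?[case: n => [|n]]; receq. Qed.
Lemma step1_scale n k A : step1 n (scale1 k A) = scale1 k (step1 n A).
Proof. by case: A => *; do 6?[case: n => [|n]]; receq. Qed.

Lemma fold1_add w A B : fold1 w (add1 A B) = add1 (fold1 w A) (fold1 w B).
Proof. by elim: w A B => [|g w IH] A B //=; rewrite /fold1 /= -IH step1_add. Qed.
Lemma fold1_scale w k A : fold1 w (scale1 k A) = scale1 k (fold1 w A).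
Proof. by elim: w A => [|g w IH] A //=; rewrite /fold1 /= -IH step1_scale. Qed.

Definition islin1 (L : St1 -> K) :=
  (forall A B, L (add1 A B) = L A + L B) /\ (forall k A, L (scale1 k A) = k * L A).

Lemma islin1_fold L w : islin1 L -> islin1 (fun S => L (fold1 w S)).
Proof. by case=> Ha Hs; split=> *; rewrite ?fold1_add ?fold1_scale ?Ha ?Hs. Qed.

Lemma L1zero L : islin1 L -> L zero1 = 0.
Proof.
case=> _ Hs; have -> : zero1 = scale1 0 zero1 by receq.
by rewrite Hs mul0r.
Qed.

Lemma L1comb2 L A B k : islin1 L -> add1 A (scale1 k B) = zero1 -> L A + k * L B = 0.
Proof. by move=> HL E; case: (HL) => Ha Hs; rewrite -Hs -Ha E L1zero. Qed.

Lemma L1comb3 L A B C k : islin1 L -> add1 (add1 A B) (scale1 k C) = zero1 ->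
  L A + L B + k * L C = 0.
Proof. by move=> HL E; case: (HL) => Ha Hs; rewrite -Hs -!Ha E L1zero. Qed.

End Auto1.

Arguments qsum {K V}.

Section Rels.
Variables (K : fieldType) (al be : K).

Lemma In_map_inv (T U : Type) (f : T -> U) x s : List.In x (map f s) -> exists y, x = f y.
Proof. elim: s => [|y s IH] //= [<-|H]; [by exists y|exact: IH]. Qed.

Arguments In_cat {T x s1 s2}.
Arguments In_map_inv {T U f x s}.

Lemma rels_cases r : List.In r (rels al be) ->
  (exists u, r = mono K gb u) \/ (exists u, r = mono K u ga) \/
  (exists s t, isxyz s /\ isxyz t /\ r = mono K s t) \/
  r = qadd (qadd (mono K ga gx) (mono K ga gy)) (qscale (-1) (mono K ga gz)) \/
  r = qadd (mono K gx gb) (qscale (-1) (mono K gy gb)) \/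
  r = qadd (mono K gx gb) (qscale (-1) (mono K gz gb)) \/
  r = qadd (mono K gx gc) (qscale (- al) (mono K gc gx)) \/
  r = qadd (mono K gy gc) (qscale (- be) (mono K gc gy)) \/
  r = qadd (mono K gz gc) (qscale (-1) (mono K gc gz)).
Proof.
have ix : isxyz gx by left.
have iy : isxyz gy by right; left.
have iz : isxyz gz by right; right.
rewrite /rels => /In_cat [/In_map_inv [u ->]|/In_cat [/In_map_inv [u ->]|/In_cat [H|H]]].
- by left; exists u.
- by right; left; exists u.
- do 2 right; left.
  move: H => /= [<-|[<-|[<-|[<-|[<-|[<-|[<-|[<-|[<-|[]]]]]]]]]];
    by do 2 eexists; split; [|split; [|reflexivity]].
- do 3 right.
  by move: H => /= [<-|[<-|[<-|[<-|[<-|[<-|[]]]]]]]; tauto.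
Qed.

End Rels.

Arguments rels_cases {K al be r}.

Section Rel1.
Variables (K : fieldType) (al be : K).
Local Notation St := (St1 K).
Local Notation step := (@step1 K al be).

Lemma step_after_b n X : step n (step 1 X) = zero1 K.
Proof. by case: X => *; do 6?[case: n => [|n]]; rewrite /zero1 /=; congr mk1; ring. Qed.

Lemma step_before_a n X : step 0 (step n X) = zero1 K.
Proof. by case: X => *; do 6?[case: n => [|n]]; rewrite /zero1 /=; congr mk1; ring. Qed.

Lemma isxyz_val t : isxyz t -> val t = 3%N \/ val t = 4%N \/ val t = 5%N.
Proof. by case=> [->|[->|->]]; rewrite ?vgx ?vgy ?vgz; tauto. Qed.

Arguments L1zero {K L}.
Arguments L1comb2 {K L A B k}.
Arguments L1comb3 {K L A B C k}.

Lemma rel1 (L : St -> K) X r : @islin1 K L -> List.In r (rels al be) ->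
  qsum r (fun s t => (L (step (val t) (step (val s) X)) : K^o)) = 0.
Proof.
move=> HL Hr.
have Z : L (zero1 K) = 0 := L1zero HL.
case: (rels_cases Hr) => [[u ->]|[[u ->]|[[s [t [Hs [Ht ->]]]]|[->|[->|[->|[->|[->|->]]]]]]]];
  rewrite ?qsum_add ?qsum_scale ?qsum_mono ?vga ?vgb ?vgc ?vgx ?vgy ?vgz.
- by rewrite step_after_b.
- by rewrite step_before_a.
- have -> : step (val t) (step (val s) X) = zero1 K.
    by case: X => *; case: (@isxyz_val s Hs) => [->|[->|->]]; case: (@isxyz_val t Ht) => [->|[->|->]];
       rewrite /zero1 /=; congr mk1; ring.
  exact: Z.
- apply: (L1comb3 HL); case: X => *; rewrite /zero1 /add1 /scale1 /=; congr mk1; ring.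
- apply: (L1comb2 HL); case: X => *; rewrite /zero1 /add1 /scale1 /=; congr mk1; ring.
- apply: (L1comb2 HL); case: X => *; rewrite /zero1 /add1 /scale1 /=; congr mk1; ring.
- apply: (L1comb2 HL); case: X => *; rewrite /zero1 /add1 /scale1 /=; congr mk1; ring.
- apply: (L1comb2 HL); case: X => *; rewrite /zero1 /add1 /scale1 /=; congr mk1; ring.
- apply: (L1comb2 HL); case: X => *; rewrite /zero1 /add1 /scale1 /=; congr mk1; ring.
Qed.

End Rel1.

Section Auto2.
Variables (K : fieldType) (al be : K).

Record St2 := mk2 { t0 : K; t1 : K; tx : K; ty : K; tz : K; tf : K }.

Definition zero2 := mk2 0 0 0 0 0 0.
Definition add2 (A B : St2) := mk2 (t0 A + t0 B) (t1 A + t1 B) (tx A + tx B) (ty A + ty B)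
  (tz A + tz B) (tf A + tf B).
Definition scale2 (k : K) (A : St2) := mk2 (k * t0 A) (k * t1 A) (k * tx A) (k * ty A)
  (k * tz A) (k * tf A).

Definition step2 (n : nat) (v : St2) : St2 :=
  match n with
  | 0 => mk2 0 (t0 v) 0 0 0 0
  | 1 => mk2 0 0 0 0 0 (tx v + ty v + tz v)
  | 2 => mk2 0 (t1 v) (al * tx v) (be * ty v) (tz v) 0
  | 3 => mk2 0 0 (t1 v) 0 0 0
  | 4 => mk2 0 0 0 (t1 v) 0 0
  | 5 => mk2 0 0 0 0 (t1 v) 0
  | _ => zero2
  end.

Definition fold2 (w : seq 'I_6) (v : St2) := foldl (fun v g => step2 (val g) v) v w.

Ltac receq2 := rewrite /zero2 /add2 /scale2 /=; congr mk2; ring.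

Lemma step2_add n A B : step2 n (add2 A B) = add2 (step2 n A) (step2 n B).
Proof. by case: A; case: B => *; do 6?[case: n => [|n]]; receq2. Qed.
Lemma step2_scale n k A : step2 n (scale2 k A) = scale2 k (step2 n A).
Proof. by case: A => *; do 6?[case: n => [|n]]; receq2. Qed.

Lemma fold2_add w A B : fold2 w (add2 A B) = add2 (fold2 w A) (fold2 w B).
Proof. by elim: w A B => [|g w IH] A B //=; rewrite /fold2 /= -IH step2_add. Qed.
Lemma fold2_scale w k A : fold2 w (scale2 k A) = scale2 k (fold2 w A).
Proof. by elim: w A => [|g w IH] A //=; rewrite /fold2 /= -IH step2_scale. Qed.

Definition islin2 (L : St2 -> K) :=
  (forall A B, L (add2 A B) = L A + L B) /\ (forall k A, L (scale2 k A) = k * L A).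

Lemma islin2_fold L w : islin2 L -> islin2 (fun S => L (fold2 w S)).
Proof. by case=> Ha Hs; split=> *; rewrite ?fold2_add ?fold2_scale ?Ha ?Hs. Qed.

Lemma L2zero L : islin2 L -> L zero2 = 0.
Proof.
case=> _ Hs; have -> : zero2 = scale2 0 zero2 by receq2.
by rewrite Hs mul0r.
Qed.

Lemma L2comb2 L A B k : islin2 L -> add2 A (scale2 k B) = zero2 -> L A + k * L B = 0.
Proof. by move=> HL E; case: (HL) => Ha Hs; rewrite -Hs -Ha E L2zero. Qed.

Lemma L2comb3 L A B C k : islin2 L -> add2 (add2 A B) (scale2 k C) = zero2 ->
  L A + L B + k * L C = 0.
Proof. by move=> HL E; case: (HL) => Ha Hs; rewrite -Hs -!Ha E L2zero. Qed.

Lemma t0_step n S : t0 (step2 n S) = 0.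
Proof. by do 6?[case: n => [|n]]. Qed.

Lemma t0_fold w S : t0 S = 0 -> t0 (fold2 w S) = 0.
Proof. by elim: w S => [|g w IH] S //= H; apply: IH; rewrite t0_step. Qed.

Lemma fold2_zero w : fold2 w zero2 = zero2.
Proof.
elim: w => [|g w IH] //=; rewrite /fold2 /=.
have -> : step2 (val g) zero2 = zero2 by case: (val g) => [|[|[|[|[|[|n]]]]]]; receq2.
exact: IH.
Qed.

Lemma tf_fold v p q r0 : exists k,
  tf (fold2 v (mk2 0 0 p q r0 0)) = k * (al ^+ (size v).-1 * p + be ^+ (size v).-1 * q + r0).
Proof.
elim: v p q r0 => [|g v IH] p q r0; first by exists 0; rewrite mul0r.
rewrite /fold2 /= -/(fold2 _ _).
have Z : forall S, S = zero2 -> tf (fold2 v S) = 0 by move=> S ->; rewrite fold2_zero.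
case: (val g) => [|[|[|[|[|[|n]]]]]] /=.
- by exists 0; rewrite mul0r Z //; receq2.
- case: v {IH Z} => [|h v]; first by exists 1; rewrite /= !expr0 !mul1r.
  exists 0; rewrite mul0r /fold2 /= -/(fold2 _ _).
  have -> : step2 (val h) (mk2 0 0 0 0 0 (p + q + r0)) = zero2.
    by case: (val h) => [|[|[|[|[|[|n]]]]]]; receq2.
  by rewrite fold2_zero.
- case: v IH Z => [|h v] IH Z; first by exists 0; rewrite mul0r.
  have [k Hk] := IH (al * p) (be * q) r0.
  exists k; rewrite Hk /= !exprS; congr (_ * _); ring.
- by exists 0; rewrite mul0r Z //; receq2.
- by exists 0; rewrite mul0r Z //; receq2.
- by exists 0; rewrite mul0r Z //; receq2.
- by exists 0; rewrite mul0r Z.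
Qed.

End Auto2.

Arguments L2zero {K L}.
Arguments L2comb2 {K L A B k}.
Arguments L2comb3 {K L A B C k}.

Section Rel2.
Variables (K : fieldType) (al be : K).
Local Notation step := (@step2 K al be).
Local Notation fold := (@fold2 K al be).
Local Notation add2 := (@add2 K).
Local Notation scale2 := (@scale2 K).

Definition r_azE : quad K :=
  qadd (qadd (mono K ga gx) (mono K ga gy)) (qscale (-1) (mono K ga gz)).

Lemma rel2 (L : St2 K -> K) X r : @islin2 K L -> List.In r (rels al be) ->
  r = r_azE \/ qsum r (fun s t => (L (step (val t) (step (val s) X)) : K^o)) = 0.
Proof.
move=> HL Hr.
have Z : L (zero2 K) = 0 := L2zero HL.
case: (rels_cases Hr) => [[u ->]|[[u ->]|[[s [t [Hs [Ht ->]]]]|[->|[->|[->|[->|[->|->]]]]]]]];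
  try (by left); right;
  rewrite ?qsum_add ?qsum_scale ?qsum_mono ?vga ?vgb ?vgc ?vgx ?vgy ?vgz.
- have -> : step (val u) (step 1 X) = zero2 K.
    by case: X => *; case: (val u) => [|[|[|[|[|[|n]]]]]]; rewrite /zero2 /=; congr mk2; ring.
  exact: Z.
- have -> : step 0 (step (val u) X) = zero2 K.
    by case: X => *; case: (val u) => [|[|[|[|[|[|n]]]]]]; rewrite /zero2 /=; congr mk2; ring.
  exact: Z.
- have -> : step (val t) (step (val s) X) = zero2 K.
    by case: X => *; case: (@isxyz_val s Hs) => [->|[->|->]]; case: (@isxyz_val t Ht) => [->|[->|->]];
       rewrite /zero2 /=; congr mk2; ring.
  exact: Z.
- apply: (L2comb2 HL); case: X => *; rewrite /zero2 /add2 /scale2 /=; congr mk2; ring.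
- apply: (L2comb2 HL); case: X => *; rewrite /zero2 /add2 /scale2 /=; congr mk2; ring.
- apply: (L2comb2 HL); case: X => *; rewrite /zero2 /add2 /scale2 /=; congr mk2; ring.
- apply: (L2comb2 HL); case: X => *; rewrite /zero2 /add2 /scale2 /=; congr mk2; ring.
- apply: (L2comb2 HL); case: X => *; rewrite /zero2 /add2 /scale2 /=; congr mk2; ring.
Qed.

Lemma rel2_az0 (L : St2 K -> K) X : @islin2 K L -> @t0 K X = 0 ->
  qsum r_azE (fun s t => (L (step (val t) (step (val s) X)) : K^o)) = 0.
Proof.
move=> HL; rewrite /r_azE !qsum_add qsum_scale !qsum_mono vga vgx vgy vgz.
case: X => x0 x1 x2 x3 x4 x5 /= H0; subst x0.
apply: (L2comb3 HL); rewrite /zero2 /add2 /scale2 /=; congr mk2; ring.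
Qed.

Lemma L2comb3D (L : St2 K -> K) A B C k D : @islin2 K L ->
  add2 (add2 A B) (scale2 k C) = D -> L A + L B + k * L C = L D.
Proof. by case=> Ha Hs <-; rewrite Ha Ha Hs. Qed.

Lemma rel2_az v n : (size v).-1 = n -> al ^+ n + be ^+ n = 1 ->
  qsum r_azE (fun s t => (@tf K (fold v (step (val t) (step (val s) (@mk2 K 1 0 0 0 0 0)))) : K^o)) = 0.
Proof.
move=> Hv Hab; rewrite /r_azE !qsum_add qsum_scale !qsum_mono vga vgx vgy vgz.
pose L := fun S => @tf K (fold v S).
have HL : @islin2 K L.
  by apply: islin2_fold; split => * //.
change (L (step 3 (step 0 (@mk2 K 1 0 0 0 0 0))) + L (step 4 (step 0 (@mk2 K 1 0 0 0 0 0)))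
  + (-1) * L (step 5 (step 0 (@mk2 K 1 0 0 0 0 0))) = 0).
rewrite (@L2comb3D L _ _ _ _ (@mk2 K 0 0 1 1 (-1) 0) HL); last first.
  by rewrite /add2 /scale2 /=; congr mk2; ring.
rewrite /L; have [k ->] := @tf_fold K al be v 1 1 (-1).
by rewrite Hv !mulr1 Hab subrr mulr0.
Qed.

End Rel2.

Arguments s0 {K}. Arguments sC {K}. Arguments sX {K}. Arguments sY {K}. Arguments sZ {K}.
Arguments sB {K}. Arguments sXB {K}. Arguments sA {K}. Arguments sAa {K}. Arguments sAb {K}.
Arguments sAX {K}. Arguments sAY {K}. Arguments sAB {K}.
Arguments t0 {K}. Arguments t1 {K}. Arguments tx {K}. Arguments ty {K}. Arguments tz {K}.
Arguments tf {K}.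
Arguments step1 {K}. Arguments fold1 {K}. Arguments step2 {K}. Arguments fold2 {K}.
Arguments islin1_fold {K} al be {L} w. Arguments islin2_fold {K} al be {L} w.

Section PhiS.
Variables (K : fieldType) (al be : K).

Definition init1 := @mk1 K 1 0 0 0 0 0 0 0 0 0 0 0 0.
Definition init2 := @mk2 K 1 0 0 0 0 0.

Definition outl1 (S : St1 K) : seq K :=
  [:: sC S; sX S; sY S; sZ S; sB S; sA S; sAX S; sAY S; sAB S; sXB S].

Definition outl (w : seq 'I_6) : seq K :=
  outl1 (fold1 al be w init1) ++ [:: tf (fold2 al be w init2)].

Definition om k (w : seq 'I_6) : 'rV[K]_k := \row_(j < k) nth 0 (outl w) j.

Definition Phi k N (F : freeDeg K N) : 'rV[K]_k := \sum_(t : N.-tuple 'I_6) F t *: om k t.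

Fact Phi_lin k N : linear (@Phi k N).
Proof.
move=> a F G; rewrite /Phi scaler_sumr -big_split; apply: eq_bigr => t _.
by rewrite !ffunE scalerDl scalerA.
Qed.

End PhiS.

Arguments outl1 {K}. Arguments outl {K}. Arguments init1 {K}. Arguments init2 {K}.

HB.instance Definition _ (K : fieldType) (al be : K) k N :=
  GRing.isLinear.Build K (freeDeg K N) 'rV[K]_k *:%R (@Phi K al be k N) (@Phi_lin K al be k N).

Section PhiT.
Variables (K : fieldType) (al be : K).
Local Notation Phi := (@Phi K al be).
Local Notation om := (@om K al be).
Local Notation ew := (@ew K).

Lemma Phi_ew k N w : size w = N -> Phi k N (ew N w) = om k w.
Proof.
move=> Hs; have Hw : size w == N by apply/eqP.
rewrite /Phi (bigD1 (Tuple Hw)) //= big1 => [|t ne]; last first.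
  rewrite ffunE; move: ne; rewrite -val_eqE /= => /negbTE ->.
  by rewrite mulr0n scale0r.
by rewrite ffunE eqxx mulr1n scale1r addr0.
Qed.

Lemma Phi_rel k N r u v : (size u + size v + 2 = N)%N ->
  Phi k N (relgen N r u v) = qsum r (fun s t => om k (u ++ s :: t :: v)).
Proof.
move=> HN; rewrite relgenE // /qsum linear_sum; apply: eq_bigr => s _.
rewrite linear_sum; apply: eq_bigr => t _; rewrite linearZZ; congr (_ *: _).
by apply: Phi_ew; rewrite size_cat /= -HN; lia.
Qed.

Lemma qsum_entry k r (h : 'I_6 -> 'I_6 -> 'rV[K]_k) j :
  (qsum r h) 0 j = qsum r (fun s t => (h s t 0 j : K^o)).
Proof.
rewrite /qsum summxE; apply: eq_bigr => s _; rewrite summxE; apply: eq_bigr => t _.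
by rewrite mxE.
Qed.

Lemma islin_outl1 j : @islin1 K (fun S => nth 0 (outl1 S) j).
Proof.
split=> *; do 10?[case: j => [|j]]; rewrite /= ?nth_nil ?addr0 ?mulr0 //.
Qed.

Lemma qsum_ext (V : lmodType K) r (h h' : 'I_6 -> 'I_6 -> V) :
  (forall s t, h s t = h' s t) -> qsum r h = qsum r h'.
Proof. by move=> H; apply: eq_bigr => s _; apply: eq_bigr => t _; rewrite H. Qed.

Lemma Phi_vanish k N :
  (k <= 10)%N \/ (k = 11 /\ exists n, N = n.+3 /\ al ^+ n + be ^+ n = 1) ->
  forall r u v, List.In r (rels al be) -> (size u + size v + 2 = N)%N ->
  Phi k N (relgen N r u v) = 0.
Proof.
move=> Hk r u v Hr HN; rewrite Phi_rel //; apply/rowP => j; rewrite qsum_entry mxE.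
have Hf1 : forall s t, fold1 al be (u ++ s :: t :: v) init1 =
   fold1 al be v (step1 al be (val t) (step1 al be (val s) (fold1 al be u init1))).
  by move=> s t; rewrite /fold1 foldl_cat.
have Hf2 : forall s t, fold2 al be (u ++ s :: t :: v) init2 =
   fold2 al be v (step2 al be (val t) (step2 al be (val s) (fold2 al be u init2))).
  by move=> s t; rewrite /fold2 foldl_cat.
case: (ltnP j 10) => Hj.
  have -> : qsum r (fun s t => (om k (u ++ [:: s, t & v]) 0 j : K^o)) =
     qsum r (fun s t => (nth 0 (outl1 (fold1 al be v (step1 al be (val t)
        (step1 al be (val s) (fold1 al be u init1))))) j : K^o)).
    by apply: qsum_ext => s t; rewrite mxE /outl nth_cat /outl1 /= Hj Hf1.
  exact: (@rel1 K al be _ _ r (islin1_fold al be _ (islin_outl1 j)) Hr).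
have Hj10 : nat_of_ord j = 10%N.
  case: Hk => [Hk|[Hk _]]; first by have := ltn_ord j; lia.
  by subst k; have := ltn_ord j; lia.
case: Hk => [Hk|[Hk [n [EN Hab]]]]; first by have := ltn_ord j; lia.
have -> : qsum r (fun s t => (om k (u ++ [:: s, t & v]) 0 j : K^o)) =
   qsum r (fun s t => (tf (fold2 al be v (step2 al be (val t)
        (step2 al be (val s) (fold2 al be u init2)))) : K^o)).
  by apply: qsum_ext => s t; rewrite mxE /outl nth_cat /outl1 /= Hj10 Hf2.
have HL : @islin2 K (fun S => tf (fold2 al be v S)) by apply: islin2_fold; split=> * //.
case: (@rel2 K al be _ (fold2 al be u init2) r HL Hr) => [Er|//]; subst r.
case: u HN Hf1 Hf2 => [|g u] HN _ _.
  have Hv : (size v).-1 = n by subst N; move: HN => /=; lia.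
  exact: (@rel2_az K al be v n Hv Hab).
apply: (@rel2_az0 K al be _ _ HL); rewrite /fold2 /= -/(fold2 _ _ _ _); apply: t0_fold; exact: t0_step.
Qed.

End PhiT.

Section Units.
Variables (K : fieldType) (al be : K).

Definition cpow1 m (S : St1 K) := @mk1 K (if m is 0 then s0 S else 0)
  (if m is 0 then sC S else s0 S + sC S) (al ^+ m * sX S) (be ^+ m * sY S) (sZ S)
  (if m is 0 then sB S else 0) (if m is 0 then sXB S else 0) (sA S) (al ^+ m * sAa S)
  (be ^+ m * sAb S) (al ^+ m * sAX S) (be ^+ m * sAY S) (if m is 0 then sAB S else 0).

Definition cpow2 m (S : St2 K) := @mk2 K (if m is 0 then t0 S else 0) (t1 S)
  (al ^+ m * tx S) (be ^+ m * ty S) (tz S) (if m is 0 then tf S else 0).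

Lemma fold1_cons g w S : fold1 al be (g :: w) S = fold1 al be w (step1 al be (val g) S).
Proof. by []. Qed.
Lemma fold1_nil S : fold1 al be [::] S = S. Proof. by []. Qed.
Lemma fold1_cat w1 w2 S : fold1 al be (w1 ++ w2) S = fold1 al be w2 (fold1 al be w1 S).
Proof. by rewrite /fold1 foldl_cat. Qed.
Lemma fold2_cons g w S : fold2 al be (g :: w) S = fold2 al be w (step2 al be (val g) S).
Proof. by []. Qed.
Lemma fold2_nil S : fold2 al be [::] S = S. Proof. by []. Qed.
Lemma fold2_cat w1 w2 S : fold2 al be (w1 ++ w2) S = fold2 al be w2 (fold2 al be w1 S).
Proof. by rewrite /fold2 foldl_cat. Qed.

Lemma fold1_nseq m S : fold1 al be (nseq m gc) S = cpow1 m S.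
Proof.
elim: m S => [|m IH] S.
  by case: S => *; rewrite /cpow1 fold1_nil /=; congr mk1; rewrite ?expr0; ring.
have -> : fold1 al be (nseq m.+1 gc) S = fold1 al be (nseq m gc) (step1 al be (val gc) S) by [].
rewrite IH vgc; case: S => *; case: m {IH} => [|m];
  rewrite /cpow1 /= ?expr0 ?exprS ?expr0; congr mk1; ring.
Qed.

Lemma fold2_nseq m S : fold2 al be (nseq m gc) S = cpow2 m S.
Proof.
elim: m S => [|m IH] S.
  by case: S => *; rewrite /cpow2 fold2_nil /=; congr mk2; rewrite ?expr0; ring.
have -> : fold2 al be (nseq m.+1 gc) S = fold2 al be (nseq m gc) (step2 al be (val gc) S) by [].
rewrite IH vgc; case: S => *; case: m {IH} => [|m];
  rewrite /cpow2 /= ?expr0 ?exprS ?expr0; congr mk2; ring.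
Qed.

Definition unitl (j : nat) : seq K := [seq (if i == j then 1 else 0) | i <- iota 0 11].

Ltac compo n :=
  rewrite [nth _ _ _]/= /outl;
  do 4 rewrite ?fold1_cons ?fold2_cons ?fold1_cat ?fold2_cat ?fold1_nseq ?fold2_nseq
        ?fold1_nil ?fold2_nil;
  rewrite ?vga ?vgb ?vgc ?vgx ?vgy ?vgz /outl1 /unitl /=;
  case: n => [|n] /=; congr [:: _; _; _; _; _; _; _; _; _; _; _]; ring.

Lemma outl_nth n j : (j < 11)%N -> outl al be (nth [::] (normals n.+3) j) = unitl j.
Proof.
case: j => [|[|[|[|[|[|[|[|[|[|[|j]]]]]]]]]]] // _.
- by compo n.
- by compo n.
- by compo n.
- by compo n.
- by compo n.
- by compo n.
- by compo n.
- by compo n.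
- by compo n.
- by compo n.
- by compo n.
Qed.

End Units.

Section Final.
Variables (K : fieldType) (al be : K).
Local Notation Phi := (@Phi K al be).
Local Notation ew := (@ew K).

Lemma size_normals n (j : nat) : (j < 11)%N -> size (nth [::] (normals n.+3) j) = n.+3.
Proof.
case: j => [|[|[|[|[|[|[|[|[|[|[|j]]]]]]]]]]] // _; rewrite /= ?size_cat ?size_nseq /=; lia.
Qed.

Lemma Phi_unit k n (j : 'I_k) : (k <= 11)%N ->
  Phi k n.+3 (ew n.+3 (nth [::] (normals n.+3) j)) = delta_mx 0 j.
Proof.
move=> Hk; have Hj : (j < 11)%N by apply: leq_trans (ltn_ord j) Hk.
rewrite Phi_ew ?size_normals //; apply/rowP => i; rewrite !mxE outl_nth //.
have Hi : (i < 11)%N by apply: leq_trans (ltn_ord i) Hk.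
rewrite /unitl (nth_map 0%N) ?size_iota // nth_iota // add0n eqxx /=.
by rewrite -val_eqE /=; case: (_ == _).
Qed.

Lemma dim_lower k n : (k <= 11)%N ->
  (forall r u v, List.In r (rels al be) -> (size u + size v + 2 = n.+3)%N ->
     Phi k n.+3 (relgen n.+3 r u v) = 0) ->
  (\dim (idealDeg al be n.+3) + k <= \dim (fullv : {vspace freeDeg K n.+3}))%N.
Proof.
move=> Hk H.
set f := linfun (Phi k n.+3).
have sub : (idealDeg al be n.+3 <= lker f)%VS.
  apply/subv_sumP => i _; apply/subv_sumP => u _; apply/subv_sumP => v _.
  apply: big_seq_subv => r Hr.
  rewrite -memvE memv_ker lfunE /= H //.
  rewrite !size_tuple; have := ltn_ord i; move: (nat_of_ord i) => j /=; lia.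
have img : (f @: fullv)%VS = fullv.
  apply/eqP; rewrite eqEsubv subvf /=; apply/subvP => x _.
  rewrite (row_sum_delta x); apply: memv_suml => j _; apply: memvZ.
  have -> : delta_mx 0 j = f (ew n.+3 (nth [::] (normals n.+3) j)).
    by rewrite lfunE /= Phi_unit.
  exact: memv_img (memvf _).
have := limg_ker_dim f fullv; rewrite capfv img dimvf => E0.
have E : (\dim (lker f) + k = \dim (fullv : {vspace freeDeg K n.+3}))%N.
  rewrite -E0; congr addn; rewrite -[LHS]mul1n; by [].
by rewrite -E leq_add2r; apply: dimvS.
Qed.

Lemma part1 n : hA al be (n + 3) = if al ^+ n + be ^+ n == 1 then 11%N else 10%N.
Proof.
rewrite addn3 /hA; case: eqP => Hab.
  have U := @dim_upper11 K al be n.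
  have L := @dim_lower 11 n (leqnn _) (@Phi_vanish K al be 11 n.+3
     (or_intror (conj erefl (ex_intro _ n (conj erefl Hab))))).
  lia.
have U := @dim_upper10 K al be n (introN eqP Hab).
have L := @dim_lower 10 n isT (@Phi_vanish K al be 10 n.+3 (or_introl isT)).
lia.
Qed.

End Final.

Theorem proposition5p3 (K : fieldType) (al be : K) (hal : al != 0) (hbe : be != 0) :
  (forall n : nat,
      hA al be (n + 3) = if al ^+ n + be ^+ n == 1 then 11%N else 10%N)
  /\
  ((forall n : nat, (3 <= n)%N -> forall a b : K, a != 0 -> b != 0 ->
        a ^+ n + b ^+ n != 1)
   <->
   (forall a b : K, a != 0 -> b != 0 -> forall i : nat, (6 <= i)%N ->
        hA a b i = 10%N)).
Proof.
split; first exact: part1.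
split.
  move=> H a b ha hb i Hi.
  have -> : i = ((i - 3) + 3)%N by lia.
  rewrite part1; case: eqP => // Habs.
  have : (3 <= i - 3)%N by lia.
  by move=> /H /(_ a b ha hb); rewrite Habs eqxx.
move=> H n Hn a b ha hb.
have h6 : (6 <= n + 3)%N by lia.
have := H a b ha hb (n + 3)%N h6; rewrite part1.
by case: eqP => // /eqP.
Qed.
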